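(* Let $A$ be a C*-algebra and $A_1,A_2\subset A$ two C*-subalgebras. Then $A_1$ and $A_2$ mutually commute in $A$ (every element of $A_1$ commutes with every element of $A_2$) if and only if the monotone map $$r: C(A)\to C(A_1)\times C(A_2),\qquad C\mapsto (C\cap A_1,\,C\cap A_2)$$ has a left adjoint.
   Context: All C*-algebras are unital and subalgebras contain the unit. For a C*-algebra $B$, $C(B)$ denotes the poset of commutative C*-subalgebras of $B$ ordered by inclusion; $C(A_1)\times C(A_2)$ carries the product order. Posets are regarded as categories, so adjoints are Galois connections. *)

(* Defs.v *)
From mathcomp Require Import all_boot all_algebra.
From mathcomp Require Import reals.
From mathcomp.real_closed Require Import complex.
Import GRing.Theory Num.Theory.
Set Implicit Arguments. Unset Strict Implicit. Unset Printing Implicit Defensive.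
Local Open Scope ring_scope.
Local Open Scope complex_scope.

Section CStar.
Variables (R : realType) (A : algType R[i]).
Variables (star : A -> A) (nrm : A -> R).

Definition is_cstar_algebra : Prop :=
  (forall x, 0 <= nrm x) /\
  (forall x, nrm x = 0 -> x = 0) /\
  (forall x y, nrm (x + y) <= nrm x + nrm y) /\
  (forall (c : R[i]) x, (nrm (c *: x))%:C = `|c| * (nrm x)%:C) /\
  (forall x y, nrm (x * y) <= nrm x * nrm y) /\
  (forall u : nat -> A,
     (forall e : R, 0 < e -> exists N : nat, forall m n : nat,
        (N <= m)%N -> (N <= n)%N -> nrm (u m - u n) < e) ->
     exists a : A, forall e : R, 0 < e -> exists N : nat, forall n : nat,
        (N <= n)%N -> nrm (u n - a) < e) /\
  (forall x, star (star x) = x) /\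
  (forall x y, star (x + y) = star x + star y) /\
  (forall (c : R[i]) x, star (c *: x) = c^* *: star x) /\
  (forall x y, star (x * y) = star y * star x) /\
  (forall x, nrm (star x * x) = nrm x ^+ 2).

Definition nclosed (S : A -> Prop) : Prop :=
  forall (u : nat -> A) (a : A), (forall n, S (u n)) ->
    (forall e : R, 0 < e -> exists N : nat, forall n : nat,
       (N <= n)%N -> nrm (u n - a) < e) -> S a.

Definition is_cstar_subalg (S : A -> Prop) : Prop :=
  S 1 /\
  (forall x y, S x -> S y -> S (x + y)) /\
  (forall (c : R[i]) x, S x -> S (c *: x)) /\
  (forall x y, S x -> S y -> S (x * y)) /\
  (forall x, S x -> S (star x)) /\
  nclosed S.

Definition commutative_set (S : A -> Prop) : Prop :=
  forall x y, S x -> S y -> x * y = y * x.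

(* membership in C(B) for a C*-subalgebra B of A: commutative C*-subalgebras
   of A contained in B (equivalently, commutative C*-subalgebras of B) *)
Definition in_CB (B : A -> Prop) (S : A -> Prop) : Prop :=
  [/\ is_cstar_subalg S, commutative_set S & (forall x, S x -> B x)].

Definition subset (S T : A -> Prop) : Prop := forall x, S x -> T x.

Definition setI (S T : A -> Prop) : A -> Prop := fun x => S x /\ T x.

Definition mutually_commute (A1 A2 : A -> Prop) : Prop :=
  forall x y, A1 x -> A2 y -> x * y = y * x.

(* r : C(A) -> C(A1) x C(A2), C |-> (C cap A1, C cap A2) has a left adjoint
   (in posets: a monotone l with l(D1,D2) <= C  <->  (D1,D2) <= r C) *)
Definition r_has_left_adjoint (A1 A2 : A -> Prop) : Prop :=
  exists l : (A -> Prop) -> (A -> Prop) -> (A -> Prop),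
    (forall D1 D2, in_CB A1 D1 -> in_CB A2 D2 -> in_CB (fun _ => True) (l D1 D2)) /\
    (forall D1 D2 E1 E2, in_CB A1 D1 -> in_CB A2 D2 -> in_CB A1 E1 -> in_CB A2 E2 ->
       subset D1 E1 -> subset D2 E2 -> subset (l D1 D2) (l E1 E2)) /\
    (forall D1 D2 C, in_CB A1 D1 -> in_CB A2 D2 -> in_CB (fun _ => True) C ->
       (subset (l D1 D2) C <->
        (subset D1 (setI C A1) /\ subset D2 (setI C A2)))).

End CStar.

(* Main.v *)
Require Import Defs.
From mathcomp Require Import all_boot all_order all_algebra.
From mathcomp Require Import reals.
From mathcomp.real_closed Require Import complex.
From mathcomp Require Import lra.
Import Order.TTheory GRing.Theory Num.Theory.
Set Implicit Arguments. Unset Strict Implicit.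
Local Open Scope ring_scope.
Local Open Scope complex_scope.

Lemma conj_i (R : realType) : ('i : R[i])^* = - 'i.
Proof. by apply/eqP; rewrite eq_complex /= oppr0 !eqxx. Qed.
Lemma conj_N1 (R : realType) : (-1 : R[i])^* = -1.
Proof. by apply/eqP; rewrite eq_complex /= ?oppr0 ?opprK ?oppr0 !eqxx. Qed.

Section S.
Variables (R : realType) (A : algType R[i]) (star : A -> A) (nrm : A -> R).
Hypothesis HA : is_cstar_algebra star nrm.

Definition gen (S : A -> Prop) : A -> Prop :=
  fun x => forall T, is_cstar_subalg star nrm T -> Defs.subset S T -> T x.
Definition commof (S : A -> Prop) : A -> Prop :=
  fun x => forall s, S s -> x * s = s * x.

Lemma gen_sub S : is_cstar_subalg star nrm (gen S).
Proof.
split; [|split; [|split; [|split; [|split]]]].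
- by move=> T [] ? _ _.
- by move=> x y hx hy T hT hS; have [_ [hd _]] := hT; apply: hd; [apply: hx|apply: hy].
- by move=> c x hx T hT hS; have [_ [_ [hd _]]] := hT; apply: hd; apply: hx.
- by move=> x y hx hy T hT hS; have [_ [_ [_ [hd _]]]] := hT; apply: hd; [apply: hx|apply: hy].
- by move=> x hx T hT hS; have [_ [_ [_ [_ [hd _]]]]] := hT; apply: hd; apply: hx.
- move=> u a hu hl T hT hS; have [_ [_ [_ [_ [_ hd]]]]] := hT.
  by apply: (hd u a) => // n; apply: hu.
Qed.

Lemma gen_incl S : Defs.subset S (gen S).
Proof. by move=> x hx T _ hS; apply: hS. Qed.

Lemma gen_min S T : is_cstar_subalg star nrm T -> Defs.subset S T -> Defs.subset (gen S) T.
Proof. by move=> hT hS x hx; apply: hx. Qed.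

Lemma nrmN x : nrm (- x) = nrm x.
Proof.
have [_ [_ [_ [hs _]]]] := HA.
apply: complexI; rewrite -scaleN1r hs normrN1 mul1r //.
Qed.

Lemma commof_sub S : (forall s, S s -> S (star s)) ->
  is_cstar_subalg star nrm (commof S).
Proof.
move=> hS.
have [h0 [h00 [htri [_ [hmul [_ [hinv [_ [_ [hanti _]]]]]]]]]] := HA.
split; [|split; [|split; [|split; [|split]]]].
- by move=> s _; rewrite mul1r mulr1.
- by move=> x y hx hy s hs; rewrite mulrDl mulrDr hx // hy.
- by move=> c x hx s hs; rewrite -scalerAl -scalerAr hx.
- by move=> x y hx hy s hs; rewrite -mulrA hy // mulrA hx // mulrA.
- move=> x hx s hs.
  have e := hx _ (hS s hs).
  by rewrite -[s]hinv -hanti -e hanti.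
- move=> u a hu hl s hs.
  apply/eqP; rewrite -subr_eq0; apply/eqP; apply: h00.
  set d := a * s - s * a.
  have hd0 := h0 d.
  case: (ltrP 0 (nrm d)) => hp; last by apply/eqP; rewrite eq_le hp hd0.
  have hps := h0 s.
  have he : 0 < nrm d / (2 * (nrm s + 1)) by rewrite divr_gt0 // ; lra.
  have [N hN] := hl _ he.
  have := hN N (leqnn N).
  rewrite ltr_pdivlMr; last by lra.
  move=> hlt.
  have hX := h0 (u N - a).
  have hdeq : d = - ((u N - a) * s) + - (s * - (u N - a)).
    by rewrite /d mulrN opprK mulrBl mulrBr (hu N s hs) opprB addrA subrK.
  have hb : nrm d <= nrm (u N - a) * nrm s + nrm s * nrm (u N - a).
    rewrite hdeq; apply: le_trans (htri _ _) _; rewrite !nrmN.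
    apply: lerD; first exact: hmul.
    by apply: le_trans (hmul _ _) _; rewrite nrmN.
  nra.
Qed.

Lemma gen_comm S : (forall s, S s -> S (star s)) -> commutative_set S ->
  commutative_set (gen S).
Proof.
move=> hst hc.
have h1 : Defs.subset (gen S) (commof S).
  by apply: gen_min; [exact: commof_sub | move=> x hx s hs; exact: hc].
have h2 : Defs.subset (gen S) (commof (gen S)).
  apply: gen_min.
  - apply: commof_sub => s hs; have [_ [_ [_ [_ [hd _]]]]] := gen_sub S; exact: hd.
  - by move=> x hx g hg; rewrite (h1 g hg x hx).
by move=> x y hx hy; apply: h2.
Qed.
End S.

Lemma decomp (R : realType) (A : algType R[i]) (star : A -> A) (z : A) :
  z = (2^-1 : R[i]) *: (z + star z) + (2^-1 * - 'i) *: ('i *: (z - star z)).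
Proof.
rewrite scalerA -mulrA.
have -> : - 'i * 'i = 1 :> R[i].
  by apply/eqP; rewrite eq_complex /= !(mul0r, mulr0, mul1r, mulr1, oppr0, subr0, addr0, add0r, opprK, mulN1r) !eqxx.
rewrite mulr1 -scalerDr addrACA subrr addr0 -mulr2n -scalerMnr scalerMnl -mulr_natr mulVf ?scale1r //.
by rewrite pnatr_eq0.
Qed.

Lemma lincomb (R : realType) (A : algType R[i]) (a s t : A) (c d : R[i]) :
  a * s = s * a -> a * t = t * a -> a * (c *: s + d *: t) = (c *: s + d *: t) * a.
Proof.
move=> h1 h2; rewrite mulrDr mulrDl -!scalerAr -!scalerAl h1 h2 //.
Qed.

Lemma sa_comm (R : realType) (A : algType R[i]) (star : A -> A) (nrm : A -> R)
    (HA : is_cstar_algebra star nrm) (A1 A2 : A -> Prop)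
    (H1 : is_cstar_subalg star nrm A1) (H2 : is_cstar_subalg star nrm A2) :
  r_has_left_adjoint star nrm A1 A2 ->
  forall h k, A1 h -> A2 k -> star h = h -> star k = k -> h * k = k * h.
Proof.
move=> [l [hl [_ hadj]]] h k h1 h2 hh hk.
set D1 := gen star nrm (fun z => z = h).
set D2 := gen star nrm (fun z => z = k).
have cD1 : in_CB star nrm A1 D1.
  split; first exact: gen_sub.
  - apply: (gen_comm HA) => //; first by move=> s ->.
    by move=> x y -> ->.
  - by apply: gen_min => // z ->.
have cD2 : in_CB star nrm A2 D2.
  split; first exact: gen_sub.
  - apply: (gen_comm HA) => //; first by move=> s ->.
    by move=> x y -> ->.
  - by apply: gen_min => // z ->.
have hC := hl _ _ cD1 cD2.
have [hs1 hs2] := (hadj _ _ _ cD1 cD2 hC).1 (fun x hx => hx).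
have [_ hcC _] := hC.
apply: hcC.
- by have [] := hs1 h (gen_incl (erefl h)).
- by have [] := hs2 k (gen_incl (erefl k)).
Qed.

Theorem mainTheorem2 (R : realType) (A : algType R[i])
    (star : A -> A) (nrm : A -> R)
    (HA : is_cstar_algebra star nrm)
    (A1 A2 : A -> Prop)
    (H1 : is_cstar_subalg star nrm A1) (H2 : is_cstar_subalg star nrm A2) :
  mutually_commute A1 A2 <-> r_has_left_adjoint star nrm A1 A2.
Proof.
split.
- move=> mc.
  exists (fun D1 D2 => gen star nrm (fun x => D1 x \/ D2 x)).
  split; [|split].
  + move=> D1 D2 [[_ [_ [_ [_ [s1 _]]]]] c1 i1] [[_ [_ [_ [_ [s2 _]]]]] c2 i2].
    split => //; first exact: gen_sub.
    apply: (gen_comm HA) => //.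
      by move=> s [hs|hs]; [left; apply: s1|right; apply: s2].
    move=> x y [hx|hx] [hy|hy].
    * exact: c1.
    * by apply: mc; [apply: i1|apply: i2].
    * by symmetry; apply: mc; [apply: i1|apply: i2].
    * exact: c2.
  + move=> D1 D2 E1 E2 _ _ _ _ s1 s2.
    apply: gen_min; first exact: gen_sub.
    by move=> x [hx|hx]; apply: gen_incl; [left; apply: s1|right; apply: s2].
  + move=> D1 D2 C [_ _ i1] [_ _ i2] [hC _ _]; split.
    * move=> hs; split => x hx; split.
      - by apply: hs; apply: gen_incl; left.
      - exact: i1.
      - by apply: hs; apply: gen_incl; right.
      - exact: i2.
    * move=> [s1 s2]; apply: gen_min => // x [hx|hx].
      - by have [] := s1 x hx.
      - by have [] := s2 x hx.
- move=> hadj x y hx hy.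
  have [h1 [hd1 [hz1 [_ [hst1 _]]]]] := H1.
  have [h2 [hd2 [hz2 [_ [hst2 _]]]]] := H2.
  have [_ [_ [_ [_ [_ [_ [hinv [hadd [hsc _]]]]]]]]] := HA.
  have sa1 z : star (z + star z) = z + star z.
    by rewrite hadd hinv addrC.
  have sa2 z : star ('i *: (z - star z)) = 'i *: (z - star z).
    have starN w : star (- w) = - star w.
      rewrite -scaleN1r hsc -[RHS]scaleN1r; congr (_ *: _); by apply/eqP; rewrite eq_complex /= ?oppr0 ?opprK ?oppr0 !eqxx.
    rewrite hsc hadd starN hinv.
    have e : 'i *: (z - star z) = (- 'i) *: (star z + - z).
      by rewrite scaleNr -scalerN opprD opprK addrC.
    rewrite e; congr (_ *: _).
    by apply/eqP; rewrite eq_complex /= ?oppr0 ?opprK ?oppr0 !eqxx.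
  have mem1 z : A1 z -> A1 (z + star z) /\ A1 ('i *: (z - star z)).
    move=> hz; split; first by apply: (hd1) => //; apply: (hst1).
    apply: (hz1); apply: (hd1); first exact: hz.
    by rewrite -scaleN1r; apply: (hz1); apply: (hst1).
  have mem2 z : A2 z -> A2 (z + star z) /\ A2 ('i *: (z - star z)).
    move=> hz; split; first by apply: (hd2) => //; apply: (hst2).
    apply: (hz2); apply: (hd2); first exact: hz.
    by rewrite -scaleN1r; apply: (hz2); apply: (hst2).
  have [X1 X2] := mem1 x hx.
  have [Y1 Y2] := mem2 y hy.
  have cm := sa_comm HA H1 H2 hadj.
  have cx u : A1 u -> star u = u -> u * y = y * u.
    move=> hu su; rewrite (decomp star y); apply: lincomb; apply: cm => //.
  rewrite (decomp star x); symmetry; apply: lincomb; symmetry; apply: cx => //.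
Qed.
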